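(* Let $((A,\cdot),N)$ be a Nijenhuis algebra and $((M,\triangleright,\triangleleft),N_M)$ a Nijenhuis bimodule over it. Then for every $n\ge0$ and every $f\in C^n_{\mathrm{Hoch}}(A;M)$ we have $d_{N,N_M}(\partial^{N,N_M}(f))=\partial^{N,N_M}(\delta_{\mathrm{Hoch}}(f))$.
   Context: Over a field of characteristic $0$. Nijenhuis algebra: associative $(A,\cdot)$ with linear $N$, $N(a)N(b)=N(N(a)b+aN(b)-N(ab))$. Nijenhuis bimodule: $A$-bimodule $(M,\triangleright,\triangleleft)$ with linear $N_M$ such that $N(a)\triangleright N_M(u)=N_M(N(a)\triangleright u+a\triangleright N_M(u)-N_M(a\triangleright u))$ and $N_M(u)\triangleleft N(a)=N_M(N_M(u)\triangleleft a+u\triangleleft N(a)-N_M(u\triangleleft a))$. $C^n_{\mathrm{Hoch}}(A;M)=\mathrm{Hom}(A^{\otimes n},M)$ ($C^0=M$), with $\delta_{\mathrm{Hoch}}(u)(a)=a\triangleright u-u\triangleleft a$ and, for $n\ge1$, $(\delta_{\mathrm{Hoch}}f)(a_1,\dots,a_{n+1})=a_1\triangleright f(a_2,\dots,a_{n+1})+\sum_{i=1}^n(-1)^if(a_1,\dots,a_ia_{i+1},\dots,a_{n+1})+(-1)^{n+1}f(a_1,\dots,a_n)\triangleleft a_{n+1}$. The map $d_{N,N_M}:\mathrm{Hom}(A^{\otimes n},M)\to\mathrm{Hom}(A^{\otimes n+1},M)$: $d_{N,N_M}(u)(a)=N(a)\triangleright u-u\triangleleft N(a)-N_M(a\triangleright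 u-u\triangleleft a)$ for $u\in M$; for $n\ge1$, $(d_{N,N_M}f)(a_1,\dots,a_{n+1})=N(a_1)\triangleright f(a_2,\dots,a_{n+1})-(-1)^nf(a_1,\dots,a_n)\triangleleft N(a_{n+1})+\sum_{i=1}^n(-1)^if(a_1,\dots,a_{i-1},N(a_i)a_{i+1}+a_iN(a_{i+1})-N(a_ia_{i+1}),\dots,a_{n+1})-N_M\big((\delta_{\mathrm{Hoch}}f)(a_1,\dots,a_{n+1})\big)$. The map $\partial^{N,N_M}:\mathrm{Hom}(A^{\otimes n},M)\to\mathrm{Hom}(A^{\otimes n},M)$: $\partial^{N,N_M}(u)=u$ for $u\in M$, and for $n\ge1$, $\partial^{N,N_M}(f)(a_1,\dots,a_n)=\sum_{S\subseteq\{1,\dots,n\}}(-1)^{|S|}N_M^{|S|}\big(f(b_1,\dots,b_n)\big)$ where $b_i=a_i$ if $i\in S$ and $b_i=N(a_i)$ if $i\notin S$. *)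

(* Defs.v *)
From HB Require Import structures.
From mathcomp Require Import all_boot all_order all_algebra.
Set Implicit Arguments. Unset Strict Implicit. Unset Printing Implicit Defensive.
Import GRing.Theory.
Local Open Scope ring_scope.

Section NijenhuisDefs.
Variables (K : fieldType) (A M : lmodType K).
Variables (mul : A -> A -> A) (lact : A -> M -> M) (ract : M -> A -> M).
Variables (N : A -> A) (NM : M -> M).

Definition linmap (V W : lmodType K) (g : V -> W) :=
  forall (c : K) (x y : V), g (c *: x + y) = c *: g x + g y.

Definition assoc_algebra :=
  [/\ forall a, linmap (mul a),
      forall b, linmap (mul^~ b)
    & forall a b c, mul a (mul b c) = mul (mul a b) c].

Definition bimodule :=
  (forall a, linmap (lact a)) /\
  (forall u, linmap (lact^~ u)) /\
  (forall a, linmap (ract^~ a)) /\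
  (forall u, linmap (ract u)) /\
  (forall a b u, lact (mul a b) u = lact a (lact b u)) /\
  (forall u a b, ract u (mul a b) = ract (ract u a) b) /\
  (forall a u b, ract (lact a u) b = lact a (ract u b)).

Definition nijenhuis_op :=
  forall a b, mul (N a) (N b) = N (mul (N a) b + mul a (N b) - N (mul a b)).

Definition nijenhuis_bimod :=
  (forall a u, lact (N a) (NM u) =
     NM (lact (N a) u + lact a (NM u) - NM (lact a u))) /\
  (forall u a, ract (NM u) (N a) =
     NM (ract (NM u) a + ract u (N a) - NM (ract u a))).

(* n-cochains: maps {ffun 'I_n -> A} -> M (functions of (a_1,...,a_n)),
   required to be multilinear so that they correspond to Hom(A^{(x)n}, M). *)
Definition upd n (a : {ffun 'I_n -> A}) (i : 'I_n) (x : A) : {ffun 'I_n -> A} :=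
  [ffun j => if j == i then x else a j].

Definition multilinear n (f : {ffun 'I_n -> A} -> M) :=
  forall (a : {ffun 'I_n -> A}) (i : 'I_n), linmap (fun x => f (upd a i x)).

Definition ftail n (a : {ffun 'I_n.+1 -> A}) : {ffun 'I_n -> A} :=
  [ffun j => a (lift ord0 j)].
Definition finit n (a : {ffun 'I_n.+1 -> A}) : {ffun 'I_n -> A} :=
  [ffun j => a (widen_ord (leqnSn n) j)].
(* (a_1, ..., a_{i-1}, g a_i a_{i+1}, a_{i+2}, ..., a_{n+1}), 0-based index i *)
Definition fmerge (g : A -> A -> A) n (a : {ffun 'I_n.+1 -> A}) (i : 'I_n)
  : {ffun 'I_n -> A} :=
  [ffun j : 'I_n => if (j < i)%N then a (widen_ord (leqnSn n) j)
             else if j == i then g (a (widen_ord (leqnSn n) j)) (a (lift ord0 j))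
             else a (lift ord0 j)].

(* Hochschild coboundary (for n = 0 this is u |-> (a |-> a|>u - u<|a)) *)
Definition hoch n (f : {ffun 'I_n -> A} -> M) : {ffun 'I_n.+1 -> A} -> M :=
  fun a =>
    lact (a ord0) (f (ftail a))
    + \sum_(i < n) (-1) ^+ i.+1 *: f (fmerge mul a i)
    + (-1) ^+ n.+1 *: ract (f (finit a)) (a ord_max).

Definition nij_bracket (x y : A) : A := mul (N x) y + mul x (N y) - N (mul x y).

Definition dNN n (f : {ffun 'I_n -> A} -> M) : {ffun 'I_n.+1 -> A} -> M :=
  fun a =>
    lact (N (a ord0)) (f (ftail a))
    - (-1) ^+ n *: ract (f (finit a)) (N (a ord_max))
    + \sum_(i < n) (-1) ^+ i.+1 *: f (fmerge nij_bracket a i)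
    - NM (hoch f a).

Definition partialNN n (f : {ffun 'I_n -> A} -> M) : {ffun 'I_n -> A} -> M :=
  fun a =>
    \sum_(S : {set 'I_n})
      (-1) ^+ #|S| *: iter #|S| NM (f [ffun i => if i \in S then a i else N (a i)]).

End NijenhuisDefs.

(* Main.v *)
Require Import Defs.
From HB Require Import structures.
From mathcomp Require Import all_boot all_order all_algebra.
Set Implicit Arguments. Unset Strict Implicit. Unset Printing Implicit Defensive.
Import GRing.Theory.
Local Open Scope ring_scope.

Lemma lin0 (K : fieldType) (V W : lmodType K) (g : V -> W) : linmap g -> g 0 = 0.
Proof.
move=> h; have := h 1 0 0; rewrite scale1r addr0 => H.
by apply/(addrI (g 0)); rewrite addr0 {3}H scale1r.
Qed.

Lemma linD (K : fieldType) (V W : lmodType K) (g : V -> W) x y : linmap g -> g (x + y) = g x + g y.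
Proof. by move=> h; have := h 1 x y; rewrite !scale1r. Qed.

Lemma linZ (K : fieldType) (V W : lmodType K) (g : V -> W) c x : linmap g -> g (c *: x) = c *: g x.
Proof. by move=> h; have := h c x 0; rewrite !addr0 (lin0 h) addr0. Qed.

Lemma linN (K : fieldType) (V W : lmodType K) (g : V -> W) x : linmap g -> g (- x) = - g x.
Proof. by move=> h; rewrite -scaleN1r linZ // scaleN1r. Qed.

Lemma linB (K : fieldType) (V W : lmodType K) (g : V -> W) x y : linmap g -> g (x - y) = g x - g y.
Proof. by move=> h; rewrite linD // linN. Qed.

Lemma lin_sum (K : fieldType) (V W : lmodType K) (g : V -> W) (I : Type) (r : seq I) (P : pred I) (F : I -> V) :
  linmap g -> g (\sum_(i <- r | P i) F i) = \sum_(i <- r | P i) g (F i).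
Proof. by move=> h; apply: (big_morph g (fun x y => linD x y h) (lin0 h)). Qed.

Lemma lin_iter (K : fieldType) (V : lmodType K) (g : V -> V) k : linmap g -> linmap (iter k g).
Proof.
move=> h; elim: k => [|k IH] c x y //=.
by rewrite IH (linD _ _ h) (linZ _ _ h).
Qed.

Definition E (K : fieldType) (V : lmodType K) (g : V -> V) k (x : V) := (-1) ^+ k *: iter k g x.

Lemma E_lin (K : fieldType) (V : lmodType K) (g : V -> V) k : linmap g -> linmap (E g k).
Proof. by move=> h c x y; rewrite /E (linD _ _ (lin_iter k h)) (linZ _ _ (lin_iter k h)) scalerDr !scalerA mulrC. Qed.

Lemma E_S (K : fieldType) (V : lmodType K) (g : V -> V) k x : linmap g -> E g k.+1 x = E g k (- g x).
Proof.
move=> h; rewrite /E iterSr (linN _ (lin_iter k h)) scalerN -scaleNr.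
by rewrite exprS mulN1r.
Qed.

Lemma E_comm (K : fieldType) (V : lmodType K) (g : V -> V) k x : linmap g -> g (E g k x) = E g k (g x).
Proof. by move=> h; rewrite /E linZ // -iterS iterSr. Qed.

Lemma sum_split1 (X : finType) (V : nmodType) (k : X) (F : {set X} -> V) :
  \sum_(S : {set X}) F S = \sum_(S : {set X} | k \notin S) (F S + F (k |: S)).
Proof.
rewrite (bigID (fun S : {set X} => k \in S)) /= big_split /= addrC; congr (_ + _).
rewrite (reindex_onto (fun S => k |: S) (fun S => S :\ k)) /=.
  apply: eq_bigl => S; rewrite setU11 /=.
  apply/eqP/idP => [<-|kS]; first by rewrite setD11.
  by rewrite setU1K.
by move=> S kS; rewrite setD1K.
Qed.

Lemma sum_lift n (k : 'I_n.+1) (V : nmodType) (F : {set 'I_n.+1} -> V) :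
  \sum_(S : {set 'I_n.+1} | k \notin S) F S = \sum_(T : {set 'I_n}) F (lift k @: T).
Proof.
rewrite (reindex (fun T : {set 'I_n} => lift k @: T)) /=.
  apply: eq_bigl => T; apply/imsetP => -[j _ /eqP]; by rewrite (negbTE (neq_lift k j)).
exists (fun S : {set 'I_n.+1} => [set j : 'I_n | lift k j \in S]) => [T _|S].
  by apply/setP => j; rewrite inE mem_imset //; exact: lift_inj.
rewrite inE => kS; apply/setP => x; apply/imsetP/idP => [[j]|xS].
  by rewrite inE => h ->.
have kx : k != x by apply: contraNneq kS => ->.
have [j xj _] := unlift_some kx; exists j => //; by rewrite inE -xj.
Qed.

Lemma rearr (V : zmodType) (P Q R S W : V) : P - S + (-(Q + R - S) + W) = P - R + (-Q + W).
Proof. rewrite !opprD opprK. rewrite -!addrA. congr (_ + _). by rewrite [-R + (S + _)]addrCA [-Q + (S + _)]addrCA addKr addrCA. Qed.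
Lemma rearr2 (V : zmodType) (a b c d e f : V) : a - b + c - (d + e + f) = (a - d) + (c - e) + (-b - f).
Proof. rewrite !opprD -!addrA. congr (_ + _). rewrite [-e + (-b - f)]addrCA [c + (-b + _)]addrCA [-d + (-b + _)]addrCA; congr (_ + _); exact: addrCA. Qed.

Definition pk (A : Type) (N : A -> A) n (S : {set 'I_n}) (a : {ffun 'I_n -> A}) : {ffun 'I_n -> A} :=
  [ffun i => if i \in S then a i else N (a i)].

Lemma partialE (K : fieldType) (A M : lmodType K) (N : A -> A) (NM : M -> M) n (f : {ffun 'I_n -> A} -> M) a :
  partialNN N NM f a = \sum_(S : {set 'I_n}) E NM #|S| (f (pk N S a)).
Proof. by []. Qed.

Lemma mem_liftT n (k : 'I_n.+1) (T : {set 'I_n}) j : (lift k j \in lift k @: T) = (j \in T).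
Proof. by rewrite mem_imset //; exact: lift_inj. Qed.
Lemma mem_liftU n (k : 'I_n.+1) (T : {set 'I_n}) j : (lift k j \in k |: lift k @: T) = (j \in T).
Proof. by rewrite !inE mem_liftT eq_sym (negbTE (neq_lift k j)). Qed.
Lemma mem_kT n (k : 'I_n.+1) (T : {set 'I_n}) : (k \in lift k @: T) = false.
Proof. by apply/imsetP => -[j _ /eqP]; rewrite (negbTE (neq_lift k j)). Qed.
Lemma mem_kU n (k : 'I_n.+1) (T : {set 'I_n}) : (k \in k |: lift k @: T).
Proof. by rewrite setU11. Qed.
Lemma card_liftT n (k : 'I_n.+1) (T : {set 'I_n}) : #|lift k @: T| = #|T|.
Proof. by rewrite card_imset //; exact: lift_inj. Qed.
Lemma card_liftU n (k : 'I_n.+1) (T : {set 'I_n}) : #|k |: lift k @: T| = #|T|.+1.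
Proof. by rewrite cardsU1 mem_kT card_liftT. Qed.

Lemma left_iter (K : fieldType) (A M : lmodType K) (lact : A -> M -> M) (N : A -> A) (NM : M -> M) :
  linmap NM -> (forall a, linmap (lact a)) ->
  (forall a u, lact (N a) (NM u) = NM (lact (N a) u + lact a (NM u) - NM (lact a u))) ->
  forall k x u, lact (N x) (iter k NM u) - NM (lact x (iter k NM u)) = iter k NM (lact (N x) u - NM (lact x u)).
Proof.
move=> hN hl hb; elim=> [|k IH] x u //=.
rewrite hb -IH -(linB _ _ hN); congr NM.
by rewrite addrAC addrK.
Qed.

Lemma right_iter (K : fieldType) (A M : lmodType K) (ract : M -> A -> M) (N : A -> A) (NM : M -> M) :
  linmap NM -> (forall a, linmap (ract^~ a)) ->
  (forall u a, ract (NM u) (N a) = NM (ract (NM u) a + ract u (N a) - NM (ract u a))) ->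
  forall k x u, ract (iter k NM u) (N x) - NM (ract (iter k NM u) x) = iter k NM (ract u (N x) - NM (ract u x)).
Proof.
move=> hN hl hb; elim=> [|k IH] x u //=.
rewrite hb -IH -(linB _ _ hN); congr NM.
by rewrite addrAC [ract (NM _) _ + _]addrC addrK.
Qed.

Lemma first_term (K : fieldType) (A M : lmodType K) (lact : A -> M -> M) (N : A -> A) (NM : M -> M)
  n (f : {ffun 'I_n -> A} -> M) (a : {ffun 'I_n.+1 -> A}) :
  linmap NM -> (forall a, linmap (lact a)) ->
  (forall a u, lact (N a) (NM u) = NM (lact (N a) u + lact a (NM u) - NM (lact a u))) ->
  lact (N (a ord0)) (partialNN N NM f (ftail a)) - NM (lact (a ord0) (partialNN N NM f (ftail a)))
  = \sum_(S : {set 'I_n.+1}) E NM #|S| (lact (pk N S a ord0) (f (ftail (pk N S a)))).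
Proof.
move=> hN hl hb.
rewrite (sum_split1 ord0) sum_lift partialE (lin_sum _ _ _ (hl _)) (lin_sum _ _ _ (hl _)) (lin_sum _ _ _ hN) -sumrB.
apply: eq_bigr => T _.
have ->: ftail (pk N (lift ord0 @: T) a) = pk N T (ftail a).
  by apply/ffunP => j; rewrite !ffunE mem_liftT.
have ->: ftail (pk N (ord0 |: lift ord0 @: T) a) = pk N T (ftail a).
  by apply/ffunP => j; rewrite !ffunE mem_liftU.
rewrite !ffunE mem_kT mem_kU card_liftT card_liftU (E_S _ _ hN).
rewrite -(linD _ _ (E_lin _ hN)) /E (linZ _ _ (hl _)) (linZ _ _ (hl _)) (linZ _ _ hN) -scalerBr.
by rewrite (left_iter hN hl hb).
Qed.

Lemma last_term (K : fieldType) (A M : lmodType K) (ract : M -> A -> M) (N : A -> A) (NM : M -> M)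
  n (f : {ffun 'I_n -> A} -> M) (a : {ffun 'I_n.+1 -> A}) :
  linmap NM -> (forall a, linmap (ract^~ a)) ->
  (forall u a, ract (NM u) (N a) = NM (ract (NM u) a + ract u (N a) - NM (ract u a))) ->
  - ((-1) ^+ n *: ract (partialNN N NM f (finit a)) (N (a ord_max)))
  - NM ((-1) ^+ n.+1 *: ract (partialNN N NM f (finit a)) (a ord_max))
  = \sum_(S : {set 'I_n.+1}) E NM #|S| ((-1) ^+ n.+1 *: ract (f (finit (pk N S a))) (pk N S a ord_max)).
Proof.
move=> hN hl hb.
under eq_bigr do rewrite (linZ _ _ (E_lin _ hN)).
rewrite -scaler_sumr -scaleNr -mulN1r -exprS (linZ _ _ hN) -scalerBr; congr (_ *: _).
rewrite (sum_split1 ord_max) sum_lift partialE.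
rewrite (lin_sum _ _ _ (hl _)) (lin_sum _ _ _ (hl _)) (lin_sum _ _ _ hN) -sumrB.
apply: eq_bigr => T _.
have lm : forall j : 'I_n, lift ord_max j = widen_ord (leqnSn n) j.
  by move=> j; apply: val_inj; rewrite /= /bump leqNgt ltn_ord.
have ->: finit (pk N (lift ord_max @: T) a) = pk N T (finit a).
  by apply/ffunP => j; rewrite !ffunE -lm mem_liftT.
have ->: finit (pk N (ord_max |: lift ord_max @: T) a) = pk N T (finit a).
  by apply/ffunP => j; rewrite !ffunE -lm mem_liftU.
rewrite !ffunE mem_kT mem_kU card_liftT card_liftU (E_S _ _ hN).
rewrite -(linD _ _ (E_lin _ hN)) /E (linZ _ _ (hl _)) (linZ _ _ (hl _)) (linZ _ _ hN) -scalerBr.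
by rewrite (right_iter hN hl hb).
Qed.
Lemma mid_term (K : fieldType) (A M : lmodType K) (mul : A -> A -> A) (N : A -> A) (NM : M -> M)
  n (f : {ffun 'I_n -> A} -> M) (a : {ffun 'I_n.+1 -> A}) (i : 'I_n) :
  linmap NM -> multilinear f -> nijenhuis_op mul N ->
  partialNN N NM f (fmerge (nij_bracket mul N) a i) - NM (partialNN N NM f (fmerge mul a i))
  = \sum_(S : {set 'I_n.+1}) E NM #|S| (f (fmerge mul (pk N S a) i)).
Proof.
move=> hN hf hnij.
rewrite !partialE (lin_sum _ _ _ hN) -sumrB (sum_split1 i).
set k := widen_ord (leqnSn n) i.
rewrite (sum_split1 k) sum_lift (sum_split1 i).
apply: eq_bigr => T iT.
set x := a k; set y := a (lift ord0 i).
set B := pk N T (fmerge mul a i).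
have lk : lift k i = lift ord0 i by apply: val_inj; rewrite /= /bump leqnn.
have key : forall S : {set 'I_n.+1}, (forall j, j != i -> (lift k j \in S) = (j \in T)) ->
   fmerge mul (pk N S a) i = upd B i (mul (pk N S a k) (pk N S a (lift ord0 i))).
  move=> S hS; apply/ffunP => j; rewrite !ffunE.
  case: (ltngtP j i) => [ji|ij|/val_inj ->]; last by rewrite eqxx.
    have jn : j != i by rewrite neq_ltn ji.
    have lj : lift k j = widen_ord (leqnSn n) j by apply: val_inj; rewrite /= /bump leqNgt ji.
    by rewrite (negbTE jn) -lj hS.
  have jn : j != i by rewrite neq_ltn ij orbT.
  have lj : lift k j = lift ord0 j by apply: val_inj; rewrite /= /bump (ltnW ij).
  by rewrite (negbTE jn) -lj hS.
have keyL : forall (g : A -> A -> A) (T0 : {set 'I_n}), (forall j, j != i -> (j \in T0) = (j \in T)) ->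
   pk N T0 (fmerge g a i) = upd B i (if i \in T0 then g x y else N (g x y)).
  move=> g T0 hT; apply/ffunP => j; rewrite !ffunE.
  case: (eqVneq j i) => [->|ji]; first by rewrite ltnn.
  by rewrite (hT j ji).
have nT : forall j, j != i -> (j \in i |: T) = (j \in T).
  by move=> j ji; rewrite in_setU1 (negbTE ji).
have hB : f B = f (upd B i (N (mul x y))).
  by rewrite {1}/B (keyL mul T) // (negbTE iT).
rewrite hB (keyL _ T) // !(keyL _ (i |: T)) // (negbTE iT) setU11.
rewrite (key (lift k @: T)); last by move=> j _; rewrite mem_liftT.
rewrite (key (k |: lift k @: T)); last by move=> j _; rewrite mem_liftU.
rewrite (key (lift k @: (i |: T))); last by move=> j ji; rewrite mem_liftT nT.
rewrite (key (k |: lift k @: (i |: T))); last by move=> j ji; rewrite mem_liftU nT.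
rewrite !ffunE -lk !mem_liftT !mem_liftU !mem_kT !mem_kU (negbTE iT) setU11 lk -/y.
rewrite !card_liftT !card_liftU cardsU1 iT /=.
rewrite -/x.
set F := fun z => f (upd B i z).
have hF : linmap F by apply: hf.
rewrite -!/(F _) !add1n hnij /nij_bracket.
rewrite !(E_S _ _ hN) !(E_comm _ _ hN).
rewrite (linB _ _ hF) (linD _ _ hF).
set e := E NM #|T|.
have he : linmap e by apply: E_lin.
rewrite !(linN _ hN) !(linB _ _ hN) !(linD _ _ hN) !(linN _ he) !(linB _ _ he) !(linD _ _ he) !opprK.
exact: rearr.
Qed.

Theorem proposition3p11 (K : fieldType) (A M : lmodType K)
  (mul : A -> A -> A) (lact : A -> M -> M) (ract : M -> A -> M)
  (N : A -> A) (NM : M -> M) :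
  [pchar K] =i pred0 ->
  assoc_algebra mul ->
  bimodule mul lact ract ->
  linmap N -> nijenhuis_op mul N ->
  linmap NM -> nijenhuis_bimod lact ract N NM ->
  forall (n : nat) (f : {ffun 'I_n -> A} -> M),
    multilinear f ->
    forall a : {ffun 'I_n.+1 -> A},
      dNN mul lact ract N NM (partialNN N NM f) a
      = partialNN N NM (hoch mul lact ract f) a.
Proof.
move=> _ _ [hl [_ [hr [_ [_ [_ _]]]]]] _ hnij hN [bl br] n f hf a.
have Hmid : \sum_(i < n) (-1) ^+ i.+1 *: partialNN N NM f (fmerge (nij_bracket mul N) a i)
   - NM (\sum_(i < n) (-1) ^+ i.+1 *: partialNN N NM f (fmerge mul a i))
   = \sum_(S : {set 'I_n.+1}) E NM #|S| (\sum_(i < n) (-1) ^+ i.+1 *: f (fmerge mul (pk N S a) i)).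
  rewrite (lin_sum _ _ _ hN) -sumrB.
  rewrite [RHS](eq_bigr (fun S : {set 'I_n.+1} => \sum_(i < n) E NM #|S| ((-1) ^+ i.+1 *: f (fmerge mul (pk N S a) i)))); last first.
    by move=> S _; rewrite (lin_sum _ _ _ (E_lin _ hN)).
  rewrite [RHS]exchange_big /=; apply: eq_bigr => i _.
  rewrite (linZ _ _ hN) -scalerBr (mid_term a i hN hf hnij) scaler_sumr; apply: eq_bigr => S _.
  by rewrite (linZ _ _ (E_lin _ hN)).
rewrite [RHS]partialE /dNN /hoch.
under [RHS]eq_bigr => S _ do rewrite !(linD _ _ (E_lin _ hN)).
rewrite !big_split /= !(linD _ _ hN) rearr2.
by rewrite (first_term f a hN hl bl) Hmid (last_term f a hN hr br).
Qed.
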